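(* Let $D$ be a $3$-dicritical digraph. Then $D$ does not contain $O_4$ as a (not necessarily induced) subdigraph.
   Context: A $2$-dicolouring is a map to $\{1,2\}$ whose colour classes induce acyclic subdigraphs (a digon $xy,yx$ is a directed cycle). $D$ is $3$-dicritical if $D$ has no $2$-dicolouring but every proper subdigraph has one. $O_4$ is the digraph on vertices $u,v,x,y$ with arcs $xy,yx$ (a digon), $ux,uy$, $xv,yv$, and $uv$. ''Contains as a subdigraph'' means up to isomorphism. *)

(* Defs.v *)
From mathcomp Require Import all_boot.
Set Implicit Arguments. Unset Strict Implicit. Unset Printing Implicit Defensive.

(* A digraph: finite vertex type V with arc relation A (no loops; at most one
   arc per ordered pair; digons allowed). *)
Definition loopless (V : finType) (A : rel V) : Prop := forall x, ~~ A x x.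

Definition is_subdigraph (V : finType) (A : rel V) (S : {set V}) (B : rel V) : Prop :=
  forall x y, B x y -> [/\ A x y, x \in S & y \in S].

Definition has_dicycle_in (V : finType) (B : rel V) (X : {set V}) : Prop :=
  exists s : seq V, [/\ s != [::], uniq s, all (fun v => v \in X) s & cycle B s].

Definition two_dicolouring (V : finType) (S : {set V}) (B : rel V) (c : V -> bool) : Prop :=
  forall b : bool, ~ has_dicycle_in B [set v in S | c v == b].

Definition two_dicolourable (V : finType) (S : {set V}) (B : rel V) : Prop :=
  exists c : V -> bool, two_dicolouring S B c.

Definition dicritical3 (V : finType) (A : rel V) : Prop :=
  ~ two_dicolourable [set: V] A /\
  forall (S : {set V}) (B : rel V), is_subdigraph A S B ->
    (S != [set: V] \/ exists x y, A x y && ~~ B x y) ->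
    two_dicolourable S B.

(* O4 on vertices u, v, x, y encoded as 0,1,2,3. *)
Definition O4_arc (i j : 'I_4) : bool :=
  match nat_of_ord i, nat_of_ord j with
  | 2, 3 | 3, 2 | 0, 2 | 0, 3 | 2, 1 | 3, 1 | 0, 1 => true
  | _, _ => false
  end.

Definition contains_O4 (V : finType) (A : rel V) : Prop :=
  exists f : 'I_4 -> V, injective f /\ forall i j, O4_arc i j -> A (f i) (f j).

(* Main.v *)
Require Import Defs.
From mathcomp Require Import all_boot.
Set Implicit Arguments. Unset Strict Implicit. Unset Printing Implicit Defensive.

Definition resX (V : finType) (B : rel V) (X : {set V}) : rel V :=
  fun a b => [&& B a b, a \in X & b \in X].

Lemma path_resX_all (V : finType) (B : rel V) (X : {set V}) x p :
  path (resX B X) x p -> all (fun v => v \in X) p.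
Proof.
elim: p x => [//|y p IH] x /= /andP [/and3P [_ _ hy] hp].
by rewrite hy (IH y hp).
Qed.

Lemma cyc_of_connect (V : finType) (B : rel V) (X : {set V}) a b :
  resX B X a b -> connect (resX B X) b a -> has_dicycle_in B X.
Proof.
move=> hab /connectP [p hp Ea]; rewrite Ea in hab.
case/shortenP: hp hab => p' hp' up' _ hab.
have hb : b \in X by case/and3P: hab.
exists (b :: p'); split => //.
  by rewrite /= hb (path_resX_all hp').
rewrite /cycle rcons_path.
apply/andP; split.
  by apply: sub_path hp' => x y /and3P [].
by case/and3P: hab.
Qed.

Section Main.
Variables (V : finType) (A : rel V) (X : {set V}) (u v : V).
Definition Bm : rel V := fun a b => A a b && ~~ ((a == u) && (b == v)).

Lemma path_split x p :
  path A x p -> all (fun z => z \in X) (x :: p) ->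
  path (resX Bm X) x p \/
  [/\ connect (resX Bm X) x u, connect (resX Bm X) v (last x p), u \in X & v \in X].
Proof.
elim: p x => [|y p IH] x; first by left.
rewrite /= => /andP [hxy hp] /and3P [hx hy hall].
have := IH y hp; rewrite /= hy hall => /(_ isT) H.
case: (boolP ((x == u) && (y == v))) => [/andP [/eqP ex /eqP ey]|hne].
  subst x y; right; split => //.
  case: H => [H|[_ H _ _]] //.
  by apply: (path_connect H); exact: mem_last.
have hB : resX Bm X x y by rewrite /resX /Bm hxy hne hx hy.
case: H => [H|[H1 H2 H3 H4]]; first by left; rewrite hB H.
right; split => //.
by apply: connect_trans (connect1 hB) H1.
Qed.
End Main.

Theorem lemma19 (V : finType) (A : rel V) :
  loopless A -> dicritical3 A -> ~ contains_O4 A.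
Proof.
move=> hl [hnc hcrit] [f [finj hf]].
set u := f (@Ordinal 4 0 isT).
set v := f (@Ordinal 4 1 isT).
set x := f (@Ordinal 4 2 isT).
set y := f (@Ordinal 4 3 isT).
have huv : A u v by apply: hf.
have hux : A u x by apply: hf.
have huy : A u y by apply: hf.
have hxv : A x v by apply: hf.
have hyv : A y v by apply: hf.
have hxy : A x y by apply: hf.
have hyx : A y x by apply: hf.
have neq : forall i j : 'I_4, nat_of_ord i != nat_of_ord j -> f i != f j.
  move=> i j hij; apply/negP => /eqP /finj E; by rewrite E eqxx in hij.
have nxu : x != u by apply: neq.
have nxv : x != v by apply: neq.
have nyu : y != u by apply: neq.
have nyv : y != v by apply: neq.
have [c hc] : two_dicolourable [set: V] (Bm A u v).
  apply: hcrit.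
    by move=> a b /andP [h _]; rewrite !in_setT.
  by right; exists u, v; rewrite /Bm huv !eqxx.
apply: hnc; exists c => b [s [sne us alls cs]].
set X := [set z in [set: V] | c z == b].
have Xc : forall z, (z \in X) = (c z == b) by move=> z; rewrite !inE.
case: s sne us alls cs => [//|a q] _ us alls cs.
have allX : all (fun z => z \in X) (a :: q) by [].
have := @path_split V A X u v a (rcons q a) cs.
rewrite /= all_rcons /= in allX *.
case/andP: allX => ha allX.
rewrite ha allX /= => /(_ isT).
case.
  move=> hp; apply: (hc b); exists (a :: q); split => //.
  move: hp; rewrite /cycle; apply: sub_path => p1 p2 /and3P [] //.
rewrite last_rcons => [[H1 H2 hu hv]].
have hvu : connect (resX (Bm A u v) X) v u := connect_trans H2 H1.
have Bxy : Bm A u v x y by rewrite /Bm hxy (negbTE nxu).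
have Byx : Bm A u v y x by rewrite /Bm hyx (negbTE nyu).
have [w [hw huw hwv nwv]] : exists w, [/\ w \in X, A u w, A w v & w != v].
  case: (boolP (x \in X)) => hx; first by exists x.
  case: (boolP (y \in X)) => hy; first by exists y.
  exfalso; apply: (hc (~~ b)); exists [:: x; y]; split => //.
  - by rewrite /= inE (negbTE (neq _ (@Ordinal 4 3 isT) _)).
  - have bf : forall p r : bool, ~~ (p == r) -> p == ~~ r by do 2 case.
    by rewrite Xc in hx; rewrite Xc in hy; rewrite /= !inE (bf _ _ hx) (bf _ _ hy).
  - by rewrite /cycle /= Bxy Byx.
apply: (hc b); apply: (@cyc_of_connect _ _ _ u w).
  by rewrite /resX /Bm huw hu hw (negbTE nwv) andbF.
apply: connect_trans _ hvu; apply: connect1.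
rewrite /resX /Bm hwv hw hv /= eqxx !andbT.
apply/eqP => E; move: huw; rewrite E; by rewrite (negbTE (hl u)).
Qed.
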